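(* Consider the setting in the context with $P_i=\tau_iI_n$, $Q_i=\zeta_iI_n$, $\rho>0$, $0<\gamma<2$. If for every $i\in\mathcal{V}$ $$\zeta_i>\frac{C_i}{m}(C_i+m),\qquad \tau_i>\max\Big\{\rho d_i+4(N-1)\rho\sqrt{n},\ \rho\Big(\frac{N}{2-\gamma}-1\Big)d_i\Big\},$$ then $\bm{G}_1^{\dagger}\succ0$, $\bm{G}_2\succ\bm{G}_3$, and there exist $\epsilon_i\in(0,1)$ with $\sum_i\epsilon_i<2-\gamma$ and $\tau_i>\rho(\frac1{\epsilon_i}-1)d_i$ for all $i$.
   Context: Let $\mathcal{G}=(\mathcal{V},\mathcal{E})$ be a connected undirected graph with $\mathcal{V}=\{1,\dots,N\}$, $N\ge2$, and let $d_i$ be the degree of $i$. The matrix $\bm{A}\in\mathbb{R}^{|\mathcal{E}|n\times Nn}$ has one block row per edge $\{i,j\}$ ($i<j$) with $I_n$ in block column $i$, $-I_n$ in block column $j$, zeros elsewhere; $A_i$ is its $i$-th block column, so $A_i^TA_i=d_iI_n$ and, for $i\ne j$, $A_i^TA_j=-I_n$ if $\{i,j\}\in\mathcal{E}$ and $0$ otherwise. Constants: $C_i>0$ (Lipschitz constants of the gradients of local losses $f_i$), $\mu_2>0$ and $m$ with $0<m\le\mu_2$. Matrices: $\bm{G}_1=\mathrm{blkdiag}(\rho d_iI_n+P_i)_i$, $\bm{G}_1^{\dagger}=\bm{G}_1-\rho\bm{A}^T\bm{A}$, $\bm{G}_2=\mathrm{blkdiag}(Q_i)_i$, $\bm{G}_3=\mathrm{blkdiag}\big(\frac{C_i}{m}(C_i+m)I_n\big)_i$.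 *)

(* Defs.v *)
From HB Require Import structures.
From mathcomp Require Import all_boot all_order all_algebra.
Set Implicit Arguments. Unset Strict Implicit. Unset Printing Implicit Defensive.
Import Order.TTheory GRing.Theory Num.Theory.
Local Open Scope ring_scope.

(* Graph on vertices 'I_N (vertex i+1 of the paper is i : 'I_N),
   given by a boolean adjacency relation [adj]. *)
Definition simple_graph N (adj : rel 'I_N) : Prop :=
  (forall i j, adj i j = adj j i) /\ (forall i, ~~ adj i i).

Definition connected_graph N (adj : rel 'I_N) : Prop :=
  forall i j, connect adj i j.

Definition degree N (adj : rel 'I_N) (i : 'I_N) : nat := #|[set j | adj i j]|.

Definition edgeT N (adj : rel 'I_N) : finType :=
  {p : 'I_N * 'I_N | (p.1 < p.2)%N && adj p.1 p.2}.

(* Block index: entry k of block i is mxvec_index i k = i*n + k. *)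
(* Incidence matrix A in R^{|E|n x Nn}: one block row per edge {i,j}, i<j,
   with I_n in block column i and -I_n in block column j. *)
Definition incA (R : pzRingType) N n (adj : rel 'I_N)
  : 'M[R]_(#|edgeT adj| * n, N * n) :=
  \sum_(e : edgeT adj) \sum_(k < n)
     (delta_mx (mxvec_index (enum_rank e) k) (mxvec_index (val e).1 k)
      - delta_mx (mxvec_index (enum_rank e) k) (mxvec_index (val e).2 k)).

Definition blkdiag (R : pzRingType) N n (B : 'I_N -> 'M[R]_n) : 'M[R]_(N * n) :=
  \sum_(i < N) \sum_(k < n) \sum_(l < n)
     B i k l *: delta_mx (mxvec_index i k) (mxvec_index i l).

Definition posdef (R : numDomainType) m (M : 'M[R]_m) : Prop :=
  M^T = M /\ forall x : 'cV[R]_m, x != 0 -> 0 < (x^T *m M *m x) 0 0.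

Definition loewner_gt (R : numDomainType) m (M1 M2 : 'M[R]_m) : Prop :=
  posdef (M1 - M2).

(* Main.v *)
Require Import Defs.
From HB Require Import structures.
From mathcomp Require Import all_boot all_order all_algebra.
From mathcomp Require Import ring lra.
Set Implicit Arguments. Unset Strict Implicit. Unset Printing Implicit Defensive.
Import Order.TTheory GRing.Theory Num.Theory.
Local Open Scope ring_scope.

Section QF.
Variable R : rcfType.

Definition qf p (M : 'M[R]_p) (x : 'cV[R]_p) := (x^T *m M *m x) 0 0.

Lemma qf_delta p (a b : 'I_p) x : qf (delta_mx a b) x = x a 0 * x b 0.
Proof.
rewrite /qf mxE (bigD1 b) //= big1 ?addr0; last first.
  move=> j /negPf jb; rewrite mxE big1 ?mul0r // => l _.
  by rewrite !mxE jb andbF mulr0.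
congr (_ * _); rewrite mxE (bigD1 a) //= big1 ?addr0; last first.
  by move=> l /negPf la; rewrite !mxE la mulr0.
by rewrite !mxE !eqxx mulr1.
Qed.

Lemma qfD p (M1 M2 : 'M[R]_p) x : qf (M1 + M2) x = qf M1 x + qf M2 x.
Proof. by rewrite /qf mulmxDr mulmxDl mxE. Qed.

Lemma qfN p (M : 'M[R]_p) x : qf (- M) x = - qf M x.
Proof. by rewrite /qf mulmxN mulNmx mxE. Qed.

Lemma qfB p (M1 M2 : 'M[R]_p) x : qf (M1 - M2) x = qf M1 x - qf M2 x.
Proof. by rewrite qfD qfN. Qed.

Lemma qfZ p a (M : 'M[R]_p) x : qf (a *: M) x = a * qf M x.
Proof. by rewrite /qf -scalemxAr -scalemxAl mxE. Qed.

Lemma qf_sum p (I : finType) (F : I -> 'M[R]_p) x :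
  qf (\sum_i F i) x = \sum_i qf (F i) x.
Proof. by rewrite /qf mulmx_sumr mulmx_suml summxE. Qed.

Lemma trZ p q a (A : 'M[R]_(p, q)) : (a *: A)^T = a *: A^T.
Proof. by apply/matrixP => i j; rewrite !mxE. Qed.

Lemma trS p q (I : finType) (F : I -> 'M[R]_(p, q)) :
  (\sum_i F i)^T = \sum_i (F i)^T.
Proof. by apply/matrixP => i j; rewrite !mxE !summxE; apply: eq_bigr => t _; rewrite mxE. Qed.

Definition xv N n (x : 'cV[R]_(N * n)) (i : 'I_N) (k : 'I_n) :=
  x (mxvec_index i k) 0.
Definition Sq N n (x : 'cV[R]_(N * n)) i := \sum_k xv x i k ^+ 2.

Lemma qf_blk N n (B : 'I_N -> 'M[R]_n) b x :
  (forall i, B i = b i *: 1%:M) -> qf (blkdiag B) x = \sum_i b i * Sq x i.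
Proof.
move=> hB; rewrite /blkdiag qf_sum; apply: eq_bigr => i _.
rewrite qf_sum /Sq mulr_sumr; apply: eq_bigr => k _.
rewrite qf_sum (bigD1 k) //= big1 ?addr0; last first.
  by move=> l /negPf lk; rewrite qfZ hB !mxE eq_sym lk mulr0 mul0r.
by rewrite qfZ qf_delta hB !mxE eqxx mulr1 /xv expr2 mulrA.
Qed.

Lemma blk_tr N n (B : 'I_N -> 'M[R]_n) :
  (forall i, (B i)^T = B i) -> (blkdiag B)^T = blkdiag B.
Proof.
move=> hB; rewrite /blkdiag trS; apply: eq_bigr => i _.
rewrite trS exchange_big; apply: eq_bigr => k _.
rewrite trS; apply: eq_bigr => l _.
rewrite trZ trmx_delta; congr (_ *: _).
by rewrite -{1}hB mxE.
Qed.

Lemma scal_tr n (b : R) : (b *: (1%:M : 'M[R]_n))^T = b *: 1%:M.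
Proof. by rewrite trZ trmx1. Qed.

Lemma delta_mulcol p q (a : 'I_p) (b : 'I_q) (x : 'cV[R]_q) :
  delta_mx a b *m x = x b 0 *: delta_mx a 0.
Proof.
apply/matrixP => i j; rewrite !mxE (bigD1 b) //= big1 ?addr0; last first.
  by move=> l /negPf lb; rewrite !mxE lb andbF mul0r.
by rewrite !mxE eqxx andbT (ord1 j) eqxx andbT mulrC.
Qed.

Lemma norm_sum (T : finType) p (r : T -> 'I_p) (v : T -> R) :
  injective r ->
  let y := \sum_t v t *: delta_mx (r t) (0 : 'I_1) in
  (y^T *m y) 0 0 = \sum_t v t ^+ 2.
Proof.
move=> rinj y; rewrite /y trS mulmx_suml summxE; apply: eq_bigr => t _.
rewrite mulmx_sumr summxE (bigD1 t) //= big1 ?addr0; last first.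
  move=> s st; rewrite trZ trmx_delta -scalemxAl -scalemxAr.
  rewrite mul_delta_mx_cond.
  have -> : (r t == r s) = false.
    by apply/negbTE; apply: contra st => /eqP /rinj ->.
  by rewrite mulr0n !scaler0 mxE.
by rewrite trZ trmx_delta -scalemxAl -scalemxAr mul_delta_mx !mxE
  !eqxx mulr1 expr2.
Qed.

Lemma qf_AtA N n (adj : rel 'I_N) x :
  qf ((incA R n adj)^T *m incA R n adj) x =
  \sum_(e : edgeT adj) \sum_(k < n) (xv x (val e).1 k - xv x (val e).2 k) ^+ 2.
Proof.
rewrite /qf mulmxA -trmx_mul -mulmxA.
have -> : incA R n adj *m x = \sum_(t : edgeT adj * 'I_n)
   (xv x (val t.1).1 t.2 - xv x (val t.1).2 t.2) *:
     delta_mx (mxvec_index (enum_rank t.1) t.2) (0 : 'I_1).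
  rewrite /incA mulmx_suml; under eq_bigr do rewrite mulmx_suml.
  rewrite pair_bigA; apply: eq_bigr => t _.
  by rewrite mulmxBl !delta_mulcol -scalerBl.
rewrite norm_sum; last first.
  move=> [e k] [e' k'] /=; rewrite /mxvec_index => /cast_ord_inj /enum_rank_inj.
  by case=> /enum_rank_inj -> ->.
by rewrite pair_bigA.
Qed.


Lemma trB p q (A B : 'M[R]_(p, q)) : (A - B)^T = A^T - B^T.
Proof. by apply/matrixP => i j; rewrite !mxE. Qed.

Lemma trD p q (A B : 'M[R]_(p, q)) : (A + B)^T = A^T + B^T.
Proof. by apply/matrixP => i j; rewrite !mxE. Qed.

Lemma pos_sum N n (x : 'cV[R]_(N * n)) (c : 'I_N -> R) :
  (forall i, 0 < c i) -> x != 0 -> 0 < \sum_i c i * Sq x i.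
Proof.
move=> hc x0.
have [r xr] : exists r, x r 0 != 0.
  apply/existsP; apply: contraNT x0; rewrite negb_exists => /forallP h.
  apply/eqP/matrixP => i j; rewrite (ord1 j) mxE.
  by have := h i; rewrite negbK => /eqP.
case/mxvec_indexP: r xr => i k xik.
have Sg : forall j, 0 <= Sq x j by move=> j; apply: sumr_ge0 => l _; exact: sqr_ge0.
have Spos : 0 < Sq x i.
  rewrite /Sq (bigD1 k) //=.
  have h1 : 0 < xv x i k ^+ 2.
    by rewrite lt_neqAle sqr_ge0 andbT eq_sym sqrf_eq0.
  have h2 : 0 <= \sum_(l | l != k) xv x i l ^+ 2.
    by apply: sumr_ge0 => l _; exact: sqr_ge0.
  lra.
rewrite (bigD1 i) //=.
have h1 : 0 < c i * Sq x i by apply: mulr_gt0.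
have h2 : 0 <= \sum_(j | j != i) c j * Sq x j.
  by apply: sumr_ge0 => j _; apply: mulr_ge0; [exact: ltW | exact: Sg].
lra.
Qed.

End QF.
Lemma sum_edges (R : rcfType) N (adj : rel 'I_N) (g : 'I_N * 'I_N -> R) :
  \sum_(e : edgeT adj) g (val e) =
  \sum_(p : 'I_N * 'I_N | (p.1 < p.2)%N && adj p.1 p.2) g p.
Proof.
symmetry.
rewrite (reindex_omap (val : edgeT adj -> 'I_N * 'I_N) insub); last first.
  by move=> i Pi; rewrite insubT.
apply: eq_bigl => -[i iA] /=; rewrite insubT ?iA /=.
by apply/eqP; congr Some; apply: val_inj.
Qed.

Lemma edge_count (R : rcfType) N (adj : rel 'I_N) (f : 'I_N -> R) :
  simple_graph adj ->
  \sum_(e : edgeT adj) (f (val e).1 + f (val e).2) =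
  \sum_i (degree adj i)%:R * f i.
Proof.
move=> [sym irr].
rewrite (@sum_edges R N adj (fun p : 'I_N * 'I_N => f p.1 + f p.2)) big_mkcond /=.
rewrite -(pair_bigA _ (fun i j : 'I_N => if (i < j)%N && adj i j then f i + f j else 0)).
have -> : \sum_(i : 'I_N) \sum_(j : 'I_N) (if (i < j)%N && adj i j then f i + f j else 0) =
   \sum_(i : 'I_N) \sum_(j : 'I_N) (if (i < j)%N && adj i j then f i else 0) +
   \sum_(j : 'I_N) \sum_(i : 'I_N) (if (i < j)%N && adj i j then f j else 0).
  rewrite [X in _ = _ + X]exchange_big.
  rewrite -big_split; apply: eq_bigr => i _; rewrite -big_split.
  by apply: eq_bigr => j _ /=; case: ifP => _; rewrite ?addr0.
rewrite -big_split; apply: eq_bigr => i _; rewrite -big_split /=.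
rewrite (eq_bigr (fun j => if adj i j then f i else 0)); last first.
  move=> j _; rewrite (sym j i).
  case: (ltngtP i j) => [h|h|/val_inj ->]; rewrite ?andbF ?addr0 ?add0r //.
  by rewrite (negPf (irr j)).
rewrite -big_mkcond /= (eq_bigl (fun j => j \in [set j | adj i j])); last first.
  by move=> j; rewrite inE.
by rewrite sumr_const mulr_natl.
Qed.

Theorem proposition2 (R : rcfType) (N n : nat) (adj : rel 'I_N)
    (C : 'I_N -> R) (mu2 m rho gamma : R) (tau zeta : 'I_N -> R) :
  (2 <= N)%N ->
  simple_graph adj -> connected_graph adj ->
  (forall i, 0 < C i) -> 0 < mu2 -> 0 < m -> m <= mu2 ->
  0 < rho -> 0 < gamma -> gamma < 2 ->
  (forall i, zeta i > C i / m * (C i + m)) ->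
  (forall i, tau i > Num.max
      (rho * (degree adj i)%:R + 4 * (N%:R - 1) * rho * Num.sqrt (n%:R))
      (rho * (N%:R / (2 - gamma) - 1) * (degree adj i)%:R)) ->
  let G1 := blkdiag (fun i => rho * (degree adj i)%:R *: (1%:M : 'M[R]_n)
                              + tau i *: 1%:M) in
  let G1dag := G1 - rho *: ((incA R n adj)^T *m incA R n adj) in
  let G2 := blkdiag (fun i => zeta i *: (1%:M : 'M[R]_n)) in
  let G3 := blkdiag (fun i => (C i / m * (C i + m)) *: (1%:M : 'M[R]_n)) in
  [/\ posdef G1dag,
      loewner_gt G2 G3 &
      exists eps : 'I_N -> R,
        [/\ forall i, 0 < eps i < 1,
            \sum_(i < N) eps i < 2 - gamma &
            forall i, tau i > rho * (1 / eps i - 1) * (degree adj i)%:R]].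
Proof.
move=> hN [sym irr] conn hC hmu hm hmmu hrho hg0 hg2 hz ht G1 G1dag G2 G3.
have sg : simple_graph adj by split.
have hN1 : (1 : R) <= N%:R by rewrite ler1n; apply: leq_trans hN.
have hN2 : (2 : R) <= N%:R by rewrite (ler_nat R 2 N).
have hsq : 0 <= Num.sqrt (n%:R : R) := sqrtr_ge0 _.
have hd : forall i, 0 <= (degree adj i)%:R :> R by move=> i; exact: ler0n.
have ht1 : forall i, rho * (degree adj i)%:R < tau i.
  move=> i; have := ht i; rewrite gt_max => /andP[h1 _].
  have : 0 <= 4 * (N%:R - 1) * rho * Num.sqrt (n%:R : R).
    apply: mulr_ge0 => //; apply: mulr_ge0; last exact: ltW.
    apply: mulr_ge0 => //; lra.
  lra.
have ht2 : forall i, rho * (N%:R / (2 - gamma) - 1) * (degree adj i)%:R < tau i.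
  by move=> i; have := ht i; rewrite gt_max => /andP[_ h2].
split.
- split.
    rewrite /G1dag trB trZ trmx_mul trmxK /G1 blk_tr // => i.
    by rewrite trD !scal_tr.
  move=> x x0; change (0 < qf G1dag x).
  rewrite /G1dag qfB qfZ qf_AtA /G1
    (qf_blk (b := fun i => rho * (degree adj i)%:R + tau i)); last first.
    by move=> i; rewrite scalerDl.
  set Q := \sum_(e : edgeT adj) _.
  set D := \sum_i (degree adj i)%:R * Sq x i.
  have hQ : Q <= 2 * D.
    rewrite /D -(edge_count (Sq x) sg) mulr_sumr /Q.
    apply: ler_sum => e _; rewrite /Sq mulrDr !mulr_sumr -big_split.
    apply: ler_sum => k _ /=.
    rewrite -subr_ge0.
    set a := xv x _ k; set b := xv x _ k.
    have -> : 2 * a ^+ 2 + 2 * b ^+ 2 - (a - b) ^+ 2 = (a + b) ^+ 2 by ring.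
    exact: sqr_ge0.
  have hP : 0 < \sum_i (tau i - rho * (degree adj i)%:R) * Sq x i.
    by apply: pos_sum => // i; rewrite subr_gt0.
  have E : \sum_i (rho * (degree adj i)%:R + tau i) * Sq x i =
      \sum_i (tau i - rho * (degree adj i)%:R) * Sq x i + 2 * rho * D.
    rewrite /D mulr_sumr -big_split; apply: eq_bigr => i _ /=; ring.
  have hQ' : rho * Q <= rho * (2 * D) by apply: ler_wpM2l => //; exact: ltW.
  rewrite E; lra.
- split.
    by rewrite /G2 /G3 trB !blk_tr // => i; exact: scal_tr.
  move=> x x0; change (0 < qf (G2 - G3) x).
  rewrite /G2 /G3 qfB (qf_blk (b := zeta)) //
    (qf_blk (b := fun i => C i / m * (C i + m))) // -sumrB.
  under eq_bigr do rewrite -mulrBl.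
  by apply: pos_sum => // i; rewrite subr_gt0.
- set K := N%:R / (2 - gamma).
  have h2g : 0 < 2 - gamma by lra.
  have hK : 1 < K by rewrite /K ltr_pdivlMr // mul1r; lra.
  pose g i := tau i - rho * (K - 1) * (degree adj i)%:R.
  have hg : forall i, 0 < g i by move=> i; rewrite /g subr_gt0; exact: ht2.
  pose s i := g i / (2 * rho * ((degree adj i)%:R + 1)).
  have hs : forall i, 0 < s i.
    move=> i; apply: divr_gt0 => //; apply: mulr_gt0; first lra.
    by have := hd i; lra.
  have hKs : forall i, 1 < K + s i by move=> i; have := hs i; lra.
  exists (fun i => (K + s i)^-1); split.
  + move=> i; have h := hKs i.
    rewrite invr_gt0 invf_lt1; last lra.
    by apply/andP; split; lra.
  + apply: (@lt_le_trans _ _ (\sum_(i < N) K^-1)).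
      apply: ltr_sum.
        have i0 : 'I_N := Ordinal (leq_trans (isT : (0 < 2)%N) hN).
        by apply/hasP; exists i0; rewrite ?mem_index_enum.
      move=> i _; rewrite ltf_pV2 ?posrE; last 2 first.
        - by have := hKs i; lra.
        - lra.
      by have := hs i; lra.
    rewrite sumr_const card_ord /K -mulr_natl invf_div.
    have hN0 : N%:R != 0 :> R by rewrite pnatr_eq0 -lt0n; apply: leq_trans hN.
    by rewrite mulr1 -[_ *+ N]mulr_natr divfK.
  + move=> i; rewrite div1r invrK.
    have hsd : rho * s i * ((degree adj i)%:R + 1) = g i / 2.
      rewrite /s; field; apply/andP; split; last lra.
      by have := hd i; lra.
    have h3 : rho * s i * (degree adj i)%:R <= rho * s i * ((degree adj i)%:R + 1).
      apply: ler_wpM2l; last lra.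
      by apply: mulr_ge0; [exact: ltW | exact: ltW].
    have := hg i; rewrite /g => hgi.
    have -> : rho * (K + s i - 1) * (degree adj i)%:R =
      rho * (K - 1) * (degree adj i)%:R + rho * s i * (degree adj i)%:R by ring.
    move: hsd h3; rewrite /g => hsd h3; lra.
Qed.
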